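(* Let $K$ be a field, $w(x)\in K[x]$ with $d=\deg w\ge2$, $W=K[w(x)]\subseteq K[x]$, and $U$ the $K$-subspace of $K[x]$ spanned by $x^m$ for positive integers $m$ not divisible by $d$. Every $f\in K[x]$ can be written uniquely as $f=f_1+f_2$ with $f_1\in U$, $f_2\in W$; set $\ell(f)=\deg f_1$ if $f_1\ne0$ and $\ell(f)=0$ otherwise. Then: 1) $\deg f\ge \ell(f)$ for all nonzero $f\in K[x]$; 2) for all $f,g\in K[x]$ with $f-g\in W$, we have $\ell(f)=\ell(g)$. *)

(* Defs.v *)
From HB Require Import structures.
From mathcomp Require Import all_boot all_order all_algebra.
Set Implicit Arguments. Unset Strict Implicit. Unset Printing Implicit Defensive.
Import Order.TTheory GRing.Theory Num.Theory.
Local Open Scope ring_scope.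

(* degree of a polynomial (deg 0 := 0 by convention here; only used for f <> 0) *)
Definition pdeg (K : fieldType) (f : {poly K}) : nat := (size f).-1.

Definition inW (K : fieldType) (w f : {poly K}) : Prop :=
  exists q : {poly K}, f = q \Po w.

(* U = span_K { x^m : m >= 1, d does not divide m }, d = deg w :
   a polynomial lies in U iff its coefficients at every index divisible
   by d (including index 0) vanish. *)
Definition inU (K : fieldType) (w f : {poly K}) : Prop :=
  forall i : nat, (pdeg w %| i)%N -> f`_i = 0.

Definition ell_of (K : fieldType) (f1 : {poly K}) : nat :=
  if f1 == 0 then 0%N else pdeg f1.

Definition Ucomp (K : fieldType) (w f f1 : {poly K}) : Prop :=
  inU w f1 /\ inW w (f - f1).

(* Main.v *)
Require Import Defs.
From HB Require Import structures.
From mathcomp Require Import all_boot all_order all_algebra.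
From mathcomp Require Import ring.
Import Order.TTheory GRing.Theory Num.Theory.
Local Open Scope ring_scope.

Section Aux.
Variables (K : fieldType) (w : {poly K}).
Hypothesis hd : (2 <= pdeg w)%N.

Lemma sw : (1 < size w)%N.
Proof. move: hd; rewrite /pdeg; case: (size w) => [|[|n]] //. Qed.

Lemma inW0 : inW w 0.
Proof. by exists 0; rewrite comp_poly0. Qed.

Lemma inWD f g : inW w f -> inW w g -> inW w (f + g).
Proof. by move=> [p ->] [q ->]; exists (p + q); rewrite comp_polyD. Qed.

Lemma inWN f : inW w f -> inW w (- f).
Proof. by move=> [p ->]; exists (- p); rewrite -!scaleN1r comp_polyZ. Qed.

Lemma inWZ c f : inW w f -> inW w (c *: f).
Proof. by move=> [p ->]; exists (c *: p); rewrite comp_polyZ. Qed.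

Lemma UW0 h : inU w h -> inW w h -> h = 0.
Proof.
move=> hU [q hq]; apply/eqP; rewrite hq comp_poly_eq0 ?sw //.
apply/negP => /negP q0.
have hn : h != 0 by rewrite hq comp_poly_eq0 ?sw.
have : lead_coef h != 0 by rewrite lead_coef_eq0.
rewrite /lead_coef hU ?eqxx //.
have -> : (size h).-1 = ((size q).-1 * (size w).-1)%N by rewrite hq size_comp_poly.
by rewrite /pdeg dvdn_mull.
Qed.

Lemma lowsize (p : {poly K}) n : (size p <= n.+1)%N -> p`_n = 0 -> (size p <= n)%N.
Proof.
move=> hs hc; rewrite leqNgt; apply/negP => hlt.
have e : size p = n.+1 by apply/eqP; rewrite eqn_leq hs hlt.
have : lead_coef p == 0 by rewrite /lead_coef e hc.
by rewrite lead_coef_eq0 => /eqP p0; move: e; rewrite p0 size_poly0.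
Qed.

Lemma exist_dec n : forall f : {poly K}, (size f <= n)%N ->
  exists f1, [/\ inU w f1, inW w (f - f1) & (size f1 <= size f)%N].
Proof.
elim: n => [|n IH] f hs.
  move: hs; rewrite leqn0 size_poly_eq0 => /eqP ->.
  exists 0; split => //; last by rewrite subr0; exact: inW0.
  by move=> i _; rewrite coef0.
case: (leqP (size f) n) => hsn; first exact: IH.
have e : size f = n.+1 by apply/eqP; rewrite eqn_leq hs hsn.
have lc : lead_coef f = f`_n by rewrite /lead_coef e.
case: (boolP (pdeg w %| n)%N) => hdv.
  move: hdv => /dvdnP [k hk].
  set c := lead_coef f / lead_coef w ^+ k.
  have lw : lead_coef w != 0 by rewrite lead_coef_eq0 -size_poly_gt0 ltnW ?sw.
  have sX : size ('X^k \Po w) = n.+1.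
    have := size_comp_poly ('X^k : {poly K}) w.
    rewrite size_polyXn /= hk mulnC -/(pdeg w).
    have : ('X^k \Po w) != 0 by rewrite comp_poly_eq0 ?sw ?monic_neq0 ?monicXn.
    by rewrite -size_poly_gt0; case: (size _) => // m _ /= ->.
  have lX : lead_coef ('X^k \Po w) = lead_coef w ^+ k.
    by rewrite lead_coef_comp ?sw // lead_coefXn size_polyXn mul1r.
  set g := f - c *: ('X^k \Po w).
  have hg : (size g <= n)%N.
    apply: lowsize.
      rewrite /g -e; apply: leq_trans (size_polyD _ _) _; rewrite size_polyN geq_max leqnn /=.
      by apply: leq_trans (size_scale_leq _ _) _; rewrite sX e.
    rewrite /g coefB coefZ -lc.
    have -> : ('X^k \Po w)`_n = lead_coef w ^+ k by rewrite -lX /lead_coef sX.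
    by rewrite /c mulfVK ?subrr // expf_neq0.
  have [g1 [g1U g1W g1s]] := IH g hg.
  exists g1; split => //; last by rewrite e; apply: leq_trans g1s _; apply: leq_trans hg _.
  have -> : f - g1 = (g - g1) + c *: ('X^k \Po w) by rewrite /g; ring.
  apply: inWD => //; apply: inWZ; by exists 'X^k.
set g := f - lead_coef f *: 'X^n.
have hg : (size g <= n)%N.
  apply: lowsize.
    rewrite /g -e; apply: leq_trans (size_polyD _ _) _; rewrite size_polyN geq_max leqnn /=.
    by apply: leq_trans (size_scale_leq _ _) _; rewrite size_polyXn e.
  by rewrite /g coefB coefZ coefXn eqxx mulr1 lc subrr.
have [g1 [g1U g1W g1s]] := IH g hg.
exists (g1 + lead_coef f *: 'X^n); split.
- move=> i hi; rewrite coefD coefZ coefXn g1U //.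
  have -> : (i == n) = false by apply/negP => /eqP ei; rewrite -ei hi in hdv.
  by rewrite mulr0 addr0.
- by have -> : f - (g1 + lead_coef f *: 'X^n) = g - g1 by rewrite /g; ring.
- apply: leq_trans (size_polyD _ _) _; rewrite geq_max e; apply/andP; split.
    by apply: leq_trans g1s _; apply: leq_trans hg _.
  by apply: leq_trans (size_scale_leq _ _) _; rewrite size_polyXn.
Qed.

Lemma uniq_dec f f1 g1 : Ucomp w f f1 -> Ucomp w f g1 -> g1 = f1.
Proof.
move=> [f1U f1W] [g1U g1W].
apply/eqP; rewrite -subr_eq0; apply/eqP; apply: UW0.
  by move=> i hi; rewrite coefB f1U // g1U // subrr.
have -> : g1 - f1 = (f - f1) + - (f - g1) by ring.
by apply: inWD => //; apply: inWN.
Qed.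

End Aux.
Arguments exist_dec {K w} hd {n f}.
Arguments uniq_dec {K w} hd {f f1 g1}.

Theorem lemma3p8 (K : fieldType) (w : {poly K}) (hd : (2 <= pdeg w)%N) :
  (* unique decomposition f = f1 + f2, f1 in U, f2 in W *)
  (forall f : {poly K}, exists f1, Ucomp w f f1 /\
      forall g1, Ucomp w f g1 -> g1 = f1) /\
  (* 1) deg f >= ell(f) for f <> 0 *)
  (forall f f1 : {poly K}, f != 0 -> Ucomp w f f1 ->
      (ell_of f1 <= pdeg f)%N) /\
  (* 2) f - g in W implies ell(f) = ell(g) *)
  (forall f g f1 g1 : {poly K}, inW w (f - g) ->
      Ucomp w f f1 -> Ucomp w g g1 -> ell_of f1 = ell_of g1).
Proof.
split; [|split].
- move=> f; have [f1 [h1 h2 _]] := exist_dec hd (leqnn (size f)).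
  by exists f1; split => // g1 hg; exact: (uniq_dec hd (conj h1 h2) hg).
- move=> f f1 _ hf1; have [e1 [h1 h2 h3]] := exist_dec hd (leqnn (size f)).
  rewrite (uniq_dec hd (conj h1 h2) hf1) /ell_of; case: ifP => // _.
  by rewrite /pdeg -!subn1 leq_sub2r.
- move=> f g f1 g1 hfg [f1U f1W] hg1.
  suff -> : g1 = f1 by [].
  apply: (uniq_dec hd) _ hg1; split => //.
  have -> : g - f1 = (f - f1) + - (f - g) by ring.
  by apply: inWD => //; apply: inWN.
Qed.
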